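(* If $\Delta$ and $\Theta$ are deterministic, then $p\cdot\Delta + (1-p)\cdot\Theta$ is deterministic for every probability $p$.
   Context: Distributions are over lqCCS extended configurations $\langle\!\langle \rho, P, R \rangle\!\rangle$ (density operator, process, observer) and a deadlock configuration $\bot$. Contexts $O[\cdot] = [\cdot] \parallel R'$ add an observer $R'$ (a process without $\tau$ and restriction whose sums are only sums of inputs on distinct channels). $\rightsquigarrow_\pi$ is the enhanced semantics with index $\pi = \diamond$ (only the process moves) or $\pi \in \{\ell,r\}^*$ (naming the observer component that acts), lifted to distributions by linearity so that all configurations in the support move with the same index; it is decomposable with respect to convex combinations. Constrained saturated bisimilarity $\sim_{cs}$ is the largest relation that, for every context, preserves barbs and matches indexed moves with related results, and it is linear (closed under convex combinations). A set $\mathcal{A}$ of distributions is deterministic if for every $\Delta \in \mathcal{A}$, every context $O[\cdot]$ and index $\pi$, whenever $O[\Delta] \rightsquigarrow_\pi \Delta'$ and $O[\Delta] \rightsquigarrow_\pi \Delta''$ then $\Delta' \sim_{cs} \Delta''$ and $\Delta', \Delta'' \in \mathcal{A}$; a distribution is deterministic if it belongs to some deterministic set. *)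

(* Defs.v *)
From HB Require Import structures.
From mathcomp Require Import all_boot all_order all_algebra.
From mathcomp Require Import boolp classical_sets cardinality fsbigop reals.
Set Implicit Arguments. Unset Strict Implicit. Unset Printing Implicit Defensive.
Import Order.TTheory GRing.Theory Num.Theory.
Local Open Scope classical_set_scope.
Local Open Scope ring_scope.

(* Abstract lqCCS setting:
   - Conf : extended configurations <<rho,P,R>> together with the deadlock bot;
   - Ctx  : contexts O[.] = [.] || R' ;  plug O c = O[c]  (on configurations);
   - Idx  : indices pi (diamond or words over {l,r});
   - step c pi Theta : the enhanced semantics  c ~>_pi Theta  on configurations. *)

Definition dist (R : realType) (Conf : choiceType) := Conf -> R.

Definition dirac (R : realType) (Conf : choiceType) (c : Conf) : dist R Conf :=
  fun x => (x == c)%:R.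

Definition cvx (R : realType) (Conf : choiceType) (p : R) (D T : dist R Conf)
  : dist R Conf := fun x => p * D x + (1 - p) * T x.

Definition is_dist (R : realType) (Conf : choiceType) (D : dist R Conf) : Prop :=
  [/\ (forall x, 0 <= D x),
      finite_set [set x | D x != 0] &
      \sum_(x \in [set: Conf]) D x = 1].

Definition push (R : realType) (Conf : choiceType) (Ctx : Type)
  (plug : Ctx -> Conf -> Conf) (O : Ctx) (D : dist R Conf) : dist R Conf :=
  fun y => \sum_(x \in [set x | plug O x = y]) D x.

(* lifting of the indexed semantics to distributions by linearity:
   D = sum_i w_i . dirac c_i,  c_i ~>_pi T_i  (same pi for all i),
   D' = sum_i w_i . T_i,  with w_i > 0 and sum_i w_i = 1 *)
Definition lift (R : realType) (Conf : choiceType) (Idx : Type)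
  (step : Conf -> Idx -> dist R Conf -> Prop) (pi : Idx)
  (D D' : dist R Conf) : Prop :=
  exists s : seq (R * Conf * dist R Conf),
    [/\ (forall t, t \in s -> 0 < t.1.1),
        \sum_(t <- s) t.1.1 = 1,
        (forall t, t \in s -> step t.1.2 pi t.2),
        D = (fun x => \sum_(t <- s) t.1.1 * @dirac R Conf t.1.2 x) &
        D' = (fun x => \sum_(t <- s) t.1.1 * t.2 x)].

Definition deterministic_set (R : realType) (Conf : choiceType) (Ctx Idx : Type)
  (plug : Ctx -> Conf -> Conf) (step : Conf -> Idx -> dist R Conf -> Prop)
  (bisim : dist R Conf -> dist R Conf -> Prop) (A : set (dist R Conf)) : Prop :=
  (forall D, A D -> is_dist D) /\
  forall D, A D -> forall (O : Ctx) (pi : Idx) (D' D'' : dist R Conf),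
    lift step pi (push plug O D) D' -> lift step pi (push plug O D) D'' ->
    [/\ bisim D' D'', A D' & A D''].

Definition deterministic (R : realType) (Conf : choiceType) (Ctx Idx : Type)
  (plug : Ctx -> Conf -> Conf) (step : Conf -> Idx -> dist R Conf -> Prop)
  (bisim : dist R Conf -> dist R Conf -> Prop) (D : dist R Conf) : Prop :=
  exists A : set (dist R Conf), deterministic_set plug step bisim A /\ A D.

Definition bisim_linear (R : realType) (Conf : choiceType)
  (bisim : dist R Conf -> dist R Conf -> Prop) : Prop :=
  forall (p : R) (D1 D2 T1 T2 : dist R Conf), 0 <= p <= 1 ->
    bisim D1 T1 -> bisim D2 T2 -> bisim (cvx p D1 D2) (cvx p T1 T2).

(* Main.v *)
Require Import Defs.
From HB Require Import structures.
From mathcomp Require Import all_boot all_order all_algebra.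
From mathcomp Require Import boolp classical_sets cardinality fsbigop reals.
From mathcomp Require Import ring lra.
Import Order.TTheory GRing.Theory Num.Theory.
Local Open Scope ring_scope.
Local Open Scope classical_set_scope.

Section S.
Variables (R : realType) (Conf : choiceType).

Lemma L1 (F : Conf -> R) (L : seq Conf) (A : set Conf) :
  uniq L -> (forall x, F x != 0 -> x \in L) ->
  \sum_(x \in A) F x = \sum_(x <- L | x \in A) F x.
Proof.
move=> uL HL; rewrite (bigfs _ _ (P := fun x => x \in A)) //.
  by rewrite set_mem_set.
move=> i _ iL; apply/eqP; apply: contraNT iL; exact: HL.
Qed.

Definition good (D : dist R Conf) (LD : seq Conf) :=
  [/\ forall x, 0 <= D x, uniq LD, forall x, D x != 0 -> x \in LD &
      \sum_(x <- LD) D x = 1].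

Lemma L2 D : is_dist D -> exists LD, good D LD.
Proof.
case=> D0 Dfin Dsum.
exists (finmap.enum_fset (fset_set [set x | D x != 0])); split => //.
- by move=> x Dx; rewrite in_fset_set // inE.
- rewrite -Dsum (L1 _ _ _ (finmap.fset_uniq (fset_set [set x | D x != 0]))); last first.
    by move=> x Dx; rewrite in_fset_set // inE.
  by apply: eq_bigl => x; rewrite in_setT.
Qed.

Lemma Lsum D LD L : good D LD -> uniq L -> (forall x, D x != 0 -> x \in L) ->
  \sum_(x <- L) D x = 1.
Proof.
case=> D0 uD sD tD uL sL.
have h1 := L1 _ _ setT uL sL. have h2 := L1 _ _ setT uD sD.
rewrite -tD.
transitivity (\sum_(x <- L | x \in setT) D x); first by apply: eq_bigl => x; rewrite in_setT.
rewrite -h1 h2; by apply: eq_bigl => x; rewrite in_setT.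
Qed.

Lemma good_dist D LD : good D LD -> is_dist D.
Proof.
move=> g; have [D0 uD sD tD] := g; split => //.
  apply: (sub_finite_set (B := [set` LD])); last exact: finite_seq.
  by move=> x /= Dx; apply: sD.
by rewrite (L1 _ _ _ uD sD); rewrite -tD; apply: eq_bigl => x; rewrite in_setT.
Qed.

Lemma inP1 (P : pred Conf) x : (x \in [set x | P x]) = P x.
Proof. by apply/idP/idP => [/set_mem //|h]; exact: mem_set. Qed.

Lemma Lswap (D : dist R Conf) L L' (P : pred Conf) : uniq L -> uniq L' ->
  (forall x, D x != 0 -> x \in L) -> (forall x, D x != 0 -> x \in L') ->
  \sum_(x <- L | P x) D x = \sum_(x <- L' | P x) D x.
Proof.
move=> u u' s s'.
have h1 := L1 _ _ [set x | P x] u s. have h2 := L1 _ _ [set x | P x] u' s'.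
transitivity (\sum_(x <- L | x \in [set x | P x]) D x).
  by apply: eq_bigl => x; rewrite inP1.
rewrite -h1 h2; by apply: eq_bigl => x; rewrite inP1.
Qed.

Lemma L3 (Ctx : Type) (plug : Ctx -> Conf -> Conf) O D LD y : good D LD ->
  push plug O D y = \sum_(x <- LD | plug O x == y) D x.
Proof.
case=> D0 uD sD tD; rewrite /push (L1 _ _ _ uD sD).
apply: eq_bigl => x.
by apply/idP/eqP => [/set_mem //|h]; exact: mem_set.
Qed.

Lemma L4 (q : R) D T LD LT : 0 <= q <= 1 -> good D LD -> good T LT ->
  good (cvx q D T) (undup (LD ++ LT)).
Proof.
move=> /andP[q0 q1] gD gT; have [D0 uD sD tD] := gD; have [T0 uT sT tT] := gT.
split.
- by move=> x; rewrite /cvx addr_ge0 // mulr_ge0 // subr_ge0.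
- exact: undup_uniq.
- move=> x; rewrite mem_undup mem_cat /cvx.
  case: (boolP (D x == 0)) => [/eqP Dx|/sD -> //].
  case: (boolP (T x == 0)) => [/eqP Tx|/sT -> //]; last by rewrite orbT.
  by rewrite Dx Tx !mulr0 addr0 eqxx.
- rewrite /cvx big_split /= -!mulr_sumr.
  rewrite (@Lsum _ _ _ gD (undup_uniq _)); last by move=> x /sD; rewrite mem_undup mem_cat => ->.
  rewrite (@Lsum _ _ _ gT (undup_uniq _)); last by move=> x /sT; rewrite mem_undup mem_cat => ->; rewrite orbT.
  by rewrite !mulr1 addrC subrK.
Qed.

Lemma L5 (Ctx : Type) (plug : Ctx -> Conf -> Conf) O (q : R) D T LD LT :
  0 <= q <= 1 -> good D LD -> good T LT ->
  push plug O (cvx q D T) = cvx q (push plug O D) (push plug O T).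
Proof.
move=> hq gD gT; have gC := @L4 q D T LD LT hq gD gT.
apply: funext => y; rewrite (@L3 _ plug O _ _ y gC) /cvx (@L3 _ plug O _ _ y gD) (@L3 _ plug O _ _ y gT).
rewrite big_split /= -!mulr_sumr.
have [_ uD sD _] := gD; have [_ uT sT _] := gT.
have [_ uC sC _] := gC.
rewrite (@Lswap _ _ _ _ uC uD _ sD); last by move=> x /sD; rewrite mem_undup mem_cat => ->.
rewrite (@Lswap _ _ _ _ uC uT _ sT) //; by move=> x /sT; rewrite mem_undup mem_cat => ->; rewrite orbT.
Qed.

Lemma le_sum_mem (T : eqType) (F : T -> R) (s : seq T) t :
  (forall u, u \in s -> 0 <= F u) -> t \in s -> F t <= \sum_(u <- s) F u.
Proof.
elim: s => // u s IH F0; rewrite inE big_cons => /orP[/eqP ->|].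
  rewrite lerDl big_seq sumr_ge0 // => i iS; apply: F0; by rewrite inE iS orbT.
move=> /IH h; apply: (le_trans (h _)); first by move=> i iS; apply: F0; rewrite inE iS orbT.
by rewrite lerDr F0 // inE eqxx.
Qed.

Lemma side (Idx : Type) (step : Conf -> Idx -> dist R Conf -> Prop) pi
  (f : Conf -> Conf) (D : dist R Conf) LD (a M : dist R Conf) (r : R)
  (s : seq (R * Conf * dist R Conf)) :
  good D LD -> (forall y, a y = \sum_(x <- LD | f x == y) D x) ->
  0 < r -> (forall x, r * a x <= M x) ->
  (forall t, t \in s -> 0 < t.1.1) ->
  (forall t, t \in s -> step t.1.2 pi t.2) ->
  M = (fun x => \sum_(t <- s) t.1.1 * @dirac R Conf t.1.2 x) ->
  Defs.lift step pi a (fun x => \sum_(t <- s) t.1.1 * a t.1.2 / M t.1.2 * t.2 x).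
Proof.
move=> gD ha r0 hM wpos hstep hMs.
have [D0 uD sD tD] := gD.
have a0 y : 0 <= a y by rewrite ha; apply: sumr_ge0.
have Mpos y : a y != 0 -> 0 < M y.
  move=> ay; apply: (lt_le_trans _ (hM y)); apply: mulr_gt0 => //.
  by rewrite lt_neqAle eq_sym ay a0.
have Mx x : M x = \sum_(t <- s) t.1.1 * (x == t.1.2)%:R by rewrite hMs.
pose sa := [seq (t.1.1 * a t.1.2 / M t.1.2, t.1.2, t.2) | t <- s & a t.1.2 != 0].
have rm (G : R * Conf * dist R Conf -> R) :
  (forall t, a t.1.2 = 0 -> G t = 0) ->
  \sum_(t <- s | a t.1.2 != 0) G t = \sum_(t <- s) G t.
  by move=> hG; apply: big_rmcond => t /negPn /eqP /hG.
exists sa; split.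
- move=> t /mapP [t0]; rewrite mem_filter => /andP [at0 t0s] -> /=.
  by apply: divr_gt0; [apply: mulr_gt0; [exact: wpos|rewrite lt_neqAle eq_sym at0 a0] | exact: Mpos].
- rewrite big_map big_filter /= rm; last by move=> t ->; rewrite mulr0 mul0r.
  have ge x : D x != 0 -> D x <= a (f x).
    move=> Dx; rewrite ha big_mkcond.
    have := @le_sum_mem _ (fun u => if f u == f x then D u else 0) LD x.
    rewrite eqxx; apply; last exact: sD.
    by move=> u _; case: ifP.
  transitivity (\sum_(t <- s) \sum_(x <- LD) t.1.1 * (f x == t.1.2)%:R * (D x / M (f x))).
    apply: eq_bigr => t _; rewrite ha big_mkcond /= mulr_sumr mulr_suml.
    apply: eq_bigr => x _; case: eqP => [e|_] /=.
      by rewrite e mulr1n mulr1 mulrA.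
    by rewrite ?mulr0n !mulr0 !mul0r.
  rewrite exchange_big /= -[RHS]tD.
  apply: eq_bigr => x _; rewrite -mulr_suml -Mx.
  have [->|Dx] := eqVneq (D x) 0; first by rewrite mul0r mulr0.
  rewrite mulrC divfK // gt_eqF // Mpos // gt_eqF //.
  apply: (lt_le_trans _ (ge x Dx)); by rewrite lt_neqAle eq_sym Dx D0.
- by move=> t /mapP [t0]; rewrite mem_filter => /andP [_ t0s] -> /=; apply: hstep.
- apply: funext => x; rewrite big_map big_filter /= rm; last by move=> t ->; rewrite mulr0 mul0r mul0r.
  rewrite /dirac.
  transitivity (\sum_(t <- s) t.1.1 * (x == t.1.2)%:R * (a x / M x)).
    rewrite -mulr_suml -Mx.
    have [->|ax] := eqVneq (a x) 0; first by rewrite mul0r mulr0.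
    by rewrite mulrC divfK // gt_eqF // Mpos.
  by apply: eq_bigr => t _; case: eqP => [->|_] /=; rewrite ?mulr1n ?mulr0n ?mulr1 ?mulr0 ?mul0r ?mulrA.
- apply: funext => x; rewrite big_map big_filter /= rm //.
  by move=> t ->; rewrite mulr0 mul0r mul0r.

Qed.

Lemma decomp (Ctx Idx : Type) (plug : Ctx -> Conf -> Conf)
  (step : Conf -> Idx -> dist R Conf -> Prop) pi O (q : R) D T LD LT E :
  0 < q < 1 -> good D LD -> good T LT ->
  Defs.lift step pi (push plug O (cvx q D T)) E ->
  exists D1 T1, [/\ Defs.lift step pi (push plug O D) D1,
    Defs.lift step pi (push plug O T) T1 & E = cvx q D1 T1].
Proof.
move=> /andP [q0 q1] gD gT [s [wpos wsum hstep hM hE]].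
have q01 : 0 <= q <= 1 by rewrite !ltW.
set a := push plug O D; set b := push plug O T.
set M := push plug O (cvx q D T) in hM *.
have eM : M = cvx q a b by rewrite /M (@L5 _ plug O q D T LD LT q01 gD gT).
have ha y : a y = \sum_(x <- LD | plug O x == y) D x by apply: L3.
have hb y : b y = \sum_(x <- LT | plug O x == y) T x by apply: L3.
have [D0 _ _ _] := gD; have [T0 _ _ _] := gT.
have a0 y : 0 <= a y by rewrite ha; apply: sumr_ge0.
have b0 y : 0 <= b y by rewrite hb; apply: sumr_ge0.
have q1' : 0 < 1 - q by rewrite subr_gt0.
have sa := @side Idx step pi (plug O) D LD a M q s gD ha q0 _ wpos hstep hM.
have sb := @side Idx step pi (plug O) T LT b M (1 - q) s gT hb q1' _ wpos hstep hM.
eexists; eexists; split.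
- apply: sa => x; rewrite eM /cvx lerDl; apply: mulr_ge0 => //; exact: ltW.
- apply: sb => x; rewrite eM /cvx lerDr; apply: mulr_ge0 => //; exact: ltW.
- apply: funext => x; rewrite hE /cvx !mulr_sumr -big_split /=.
  apply: eq_big_seq => t ts.
  have Mc : 0 < M t.1.2.
    rewrite hM /=; have wt := wpos t ts; apply: (lt_le_trans wt).
    have := @le_sum_mem _ (fun u => u.1.1 * @dirac R Conf u.1.2 t.1.2) s t.
    rewrite /dirac eqxx mulr1; apply => //.
    by move=> u us; apply: mulr_ge0; [exact: ltW (wpos u us)|rewrite /dirac ler0n].
  have Me : M t.1.2 = q * a t.1.2 + (1 - q) * b t.1.2 by rewrite eM.
  have Mn : M t.1.2 != 0 by rewrite gt_eqF.
  move: Mn; rewrite Me => Mn.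
  by field.
Qed.

Lemma cvx0 (D T : dist R Conf) : cvx 0 D T = T.
Proof. by apply: funext => x; rewrite /cvx mul0r add0r subr0 mul1r. Qed.
Lemma cvx1 (D T : dist R Conf) : cvx 1 D T = D.
Proof. by apply: funext => x; rewrite /cvx mul1r subrr mul0r addr0. Qed.
End S.

Theorem lemmaC8 (R : realType) (Conf : choiceType) (Ctx Idx : Type)
  (plug : Ctx -> Conf -> Conf) (step : Conf -> Idx -> dist R Conf -> Prop)
  (bisim : dist R Conf -> dist R Conf -> Prop)
  (Hlin : bisim_linear bisim)
  (D T : dist R Conf) (p : R) :
  0 <= p <= 1 ->
  deterministic plug step bisim D ->
  deterministic plug step bisim T ->
  deterministic plug step bisim (cvx p D T).
Proof.
move=> hp [A1 [[A1d A1c] A1D]] [A2 [[A2d A2c] A2T]].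
pose A := fun E => exists (q : R) D' T', [/\ 0 <= q <= 1, A1 D', A2 T' & E = cvx q D' T'].
exists A; split; last by exists p, D, T.
split.
  move=> E [q [D' [T' [hq h1 h2 ->]]]].
  have [LD gD] := @L2 _ _ _ (A1d _ h1); have [LT gT] := @L2 _ _ _ (A2d _ h2).
  exact: @good_dist _ _ _ _ (@L4 _ _ q _ _ _ _ hq gD gT).
move=> E [q [D' [T' [hq h1 h2 ->]]]] O pi E1 E2 l1 l2.
have [qe|q0] := eqVneq q 0.
  rewrite qe cvx0 in l1 l2; have [b12 a1 a2] := A2c _ h2 O pi _ _ l1 l2.
  split => //.
    by exists 0, D', E1; rewrite cvx0 lexx ler01.
  by exists 0, D', E2; rewrite cvx0 lexx ler01.
have [qe|q1] := eqVneq q 1.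
  rewrite qe cvx1 in l1 l2; have [b12 a1 a2] := A1c _ h1 O pi _ _ l1 l2.
  split => //.
    by exists 1, E1, T'; rewrite cvx1 lexx ler01.
  by exists 1, E2, T'; rewrite cvx1 lexx ler01.
have hq' : 0 < q < 1.
  by case/andP: hq => a b; rewrite !lt_neqAle a b eq_sym q0 q1.
have [LD gD] := @L2 _ _ _ (A1d _ h1); have [LT gT] := @L2 _ _ _ (A2d _ h2).
have [D1 [T1 [lD1 lT1 e1]]] := @decomp _ _ _ _ plug step pi O q _ _ _ _ _ hq' gD gT l1.
have [D2 [T2 [lD2 lT2 e2]]] := @decomp _ _ _ _ plug step pi O q _ _ _ _ _ hq' gD gT l2.
have [bD aD1 aD2] := A1c _ h1 O pi _ _ lD1 lD2.
have [bT aT1 aT2] := A2c _ h2 O pi _ _ lT1 lT2.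
rewrite e1 e2; split.
- exact: Hlin.
- by exists q, D1, T1.
- by exists q, D2, T2.
Qed.
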